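(* Let $\Phi$ be irreducible with highest root $\gamma$ and $\mathfrak h_\gamma=\Phi^+\setminus\{\gamma\}$. Fix $w\in W$ and $\beta\in\Phi^+$. Then there is at most one $v\in W$ such that $v>w$ in Bruhat order, $\beta\in N^\gamma_w\cap N_v$, $\ell_\gamma(w)=\ell_\gamma(v)$, and $v^{-1}\beta=-\gamma$.
   Context: $\Phi$ is a crystallographic root system in a real Euclidean space with base $\Delta$, positive roots $\Phi^+$, $\Phi^-=-\Phi^+$, Weyl group $W$; $s_\alpha$ is the reflection through $\alpha$. $\Phi$ irreducible means it is not a disjoint union of two root systems; then there is a unique highest root $\gamma\in\Phi^+$ with $\alpha\prec\gamma$ for all $\alpha\in\Phi$, where $\alpha\prec\beta$ means $\beta-\alpha$ is a sum of positive roots. For $w\in W$, $N_w=\{\beta\in\Phi^+: w^{-1}\beta\in\Phi^-\}$, $N^\gamma_w=\{\beta\in\Phi^+: w^{-1}\beta\in-\mathfrak h_\gamma\}$, and $\ell_\gamma(w)=|N^\gamma_w|$. Bruhat order $<$ is the transitive closure of the relations $u<s_\alpha u$ for $\alpha\in\Phi^+$ with $(s_\alpha u)^{-1}\alpha\in\Phi^-$. *)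

(* Defs.v *)
From HB Require Import structures.
From mathcomp Require Import all_boot all_order all_algebra.
From mathcomp Require Import boolp reals.
Set Implicit Arguments. Unset Strict Implicit. Unset Printing Implicit Defensive.
Import Order.TTheory GRing.Theory Num.Theory.
Local Open Scope ring_scope.

(* The real Euclidean space is R^n (column vectors 'cV[R]_n) with the
   standard inner product; Weyl group elements are n x n matrices acting
   on the left, so  s_a u  is  refl a *m u  and  w^{-1} b  is  invmx w *m b. *)

Section RootSystems.
Variables (R : realType) (n : nat).
Local Notation vec := 'cV[R]_n.
Local Notation mat := 'M[R]_n.

Definition dot (x y : vec) : R := (x^T *m y) 0 0.

Definition refl (a : vec) : mat := 1%:M - (2 / dot a a) *: (a *m a^T).

(* crystallographic (reduced) root system spanning R^n; finite since a seq *)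
Definition root_system (Phi : seq vec) : Prop :=
  [/\ (0 : vec) \notin Phi,
      (forall x : vec, exists c : nat -> R,
          x = \sum_(i < size Phi) c i *: Phi`_i),
      (forall a b, a \in Phi -> b \in Phi -> refl a *m b \in Phi),
      (forall a b, a \in Phi -> b \in Phi ->
          exists z : int, 2 * dot b a / dot a a = z%:~R) &
      (forall a (c : R), a \in Phi -> c *: a \in Phi -> c = 1 \/ c = -1)].

Definition irreducible (Phi : seq vec) : Prop :=
  Phi != [::] /\
  forall P : pred vec,
    (forall a b, a \in Phi -> b \in Phi -> P a -> ~~ P b -> dot a b = 0) ->
    (forall a, a \in Phi -> P a) \/ (forall a, a \in Phi -> ~~ P a).

Definition is_base (Phi Delta : seq vec) : Prop :=
  [/\ {subset Delta <= Phi},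
      (forall c : 'I_(size Delta) -> R,
          \sum_(i < size Delta) c i *: Delta`_i = 0 -> forall i, c i = 0) &
      (forall b, b \in Phi -> exists k : 'I_(size Delta) -> int,
          b = \sum_(i < size Delta) (k i)%:~R *: Delta`_i /\
          ((forall i, 0 <= k i) \/ (forall i, k i <= 0)))].

Definition posroot (Phi Delta : seq vec) (b : vec) : Prop :=
  b \in Phi /\ exists k : 'I_(size Delta) -> int,
    (forall i, 0 <= k i) /\ b = \sum_(i < size Delta) (k i)%:~R *: Delta`_i.

Definition negroot (Phi Delta : seq vec) (b : vec) : Prop :=
  posroot Phi Delta (- b).

Definition prec (Phi Delta : seq vec) (a b : vec) : Prop :=
  exists s : seq vec, (forall x, x \in s -> posroot Phi Delta x) /\
    b - a = \sum_(x <- s) x.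

Definition highest_root (Phi Delta : seq vec) (g : vec) : Prop :=
  posroot Phi Delta g /\ forall a, a \in Phi -> prec Phi Delta a g.

Inductive weyl (Phi : seq vec) : mat -> Prop :=
  | weyl_refl a : a \in Phi -> weyl Phi (refl a)
  | weyl_one : weyl Phi 1%:M
  | weyl_mul u v : weyl Phi u -> weyl Phi v -> weyl Phi (u *m v)
  | weyl_inv u : weyl Phi u -> weyl Phi (invmx u).

Definition Nset (Phi Delta : seq vec) (w : mat) (b : vec) : Prop :=
  posroot Phi Delta b /\ negroot Phi Delta (invmx w *m b).

Definition hgamma (Phi Delta : seq vec) (g b : vec) : Prop :=
  posroot Phi Delta b /\ b <> g.

Definition Ngamma (Phi Delta : seq vec) (g : vec) (w : mat) (b : vec) : Prop :=
  posroot Phi Delta b /\ hgamma Phi Delta g (- (invmx w *m b)).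

Definition ell_gamma (Phi Delta : seq vec) (g : vec) (w : mat) : nat :=
  size (undup [seq b <- Phi | `[< Ngamma Phi Delta g w b >]]).

Inductive bruhat_lt (Phi Delta : seq vec) : mat -> mat -> Prop :=
  | bruhat_step u a : weyl Phi u -> posroot Phi Delta a ->
      negroot Phi Delta (invmx (refl a *m u) *m a) ->
      bruhat_lt Phi Delta u (refl a *m u)
  | bruhat_trans u v x : bruhat_lt Phi Delta u v -> bruhat_lt Phi Delta v x ->
      bruhat_lt Phi Delta u x.

End RootSystems.

(* Main.v *)
Require Import Defs.
From HB Require Import structures.
From mathcomp Require Import all_boot all_order all_algebra.
From mathcomp Require Import boolp reals zify ring.
Import Order.TTheory GRing.Theory Num.Theory.
Local Open Scope ring_scope.
Set Implicit Arguments. Unset Strict Implicit.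

Section S.
Variables (R : realType) (n : nat).
Local Notation vec := 'cV[R]_n.
Local Notation mat := 'M[R]_n.

Lemma zhelp (V : zmodType) (x y : V) : x - y - (y - (y + y)) = x.
Proof. by rewrite opprB addrK addrNK. Qed.

Lemma colM1 (x : vec) (y : 'M[R]_1) : x *m y = y 0 0 *: x.
Proof.
by apply/matrixP => i j; rewrite !mxE big_ord1 (ord1 j) mulrC.
Qed.

Lemma refl_mul (a b : vec) :
  refl a *m b = b - (2 / dot a a * dot a b) *: a.
Proof.
rewrite /refl mulmxBl mul1mx -scalemxAl -mulmxA colM1 scalerA.
by rewrite /dot.
Qed.

Lemma dot_ge0 (b : vec) : b != 0 -> dot b b != 0.
Proof.
move=> hb; rewrite /dot mxE.
apply/eqP => /eqP; rewrite psumr_eq0; last by move=> i _; rewrite mxE -expr2 sqr_ge0.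
move=> /allP H; move/eqP: hb; apply; apply/matrixP => i j.
rewrite (ord1 j) mxE.
have := H i (mem_index_enum i); rewrite mxE mulf_eq0 orbb => /eqP //.
Qed.

Lemma refl_invol (a : vec) : refl a *m refl a = 1%:M.
Proof.
rewrite /refl mulmxBl mul1mx mulmxBr mulmx1 -!scalemxAl -!scalemxAr.
rewrite !mulmxA -[a *m a^T *m a](mulmxA) colM1 -/(dot a a) -scalemxAl scalerA.
rewrite scalerA.
case: (eqVneq (dot a a) 0) => [->|hd]; first by rewrite invr0 !mulr0 !scale0r !subr0.
have -> : 2 / dot a a * (2 / dot a a * dot a a) = 2 / dot a a + 2 / dot a a.
  by field.
by rewrite scalerDl zhelp.
Qed.

Lemma refl_unit (a : vec) : refl a \in unitmx.
Proof. by case: (mulmx1_unit (refl_invol a)). Qed.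

Lemma inv_unique (C X : mat) : C \in unitmx -> C *m X = 1%:M -> X = invmx C.
Proof. by move=> uC h; rewrite -(mulKmx uC X) h mulmx1. Qed.

Lemma refl_inv (a : vec) : invmx (refl a) = refl a.
Proof. by rewrite -(inv_unique (refl_unit a) (refl_invol a)). Qed.

Lemma invmxM (A B : mat) : A \in unitmx -> B \in unitmx ->
  invmx (A *m B) = invmx B *m invmx A.
Proof.
move=> uA uB; symmetry; apply: inv_unique; first by rewrite unitmx_mul uA.
by rewrite mulmxA -(mulmxA A) mulmxV // mulmx1 mulmxV.
Qed.

Lemma refl_scale (a : vec) (c : R) : c != 0 -> refl (c *: a) = refl a.
Proof.
move=> hc; have tZ : (c *: a)^T = c *: a^T by apply/matrixP=> i j; rewrite !mxE.
rewrite /refl /dot tZ -!scalemxAl -!scalemxAr !scalerA !mxE; set d := \sum_j _.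
congr (_ - _ *: _).
case: (eqVneq d 0) => [->|hd]; first by rewrite !(mulr0, invr0, mul0r).
by field; rewrite hc hd.
Qed.

Section RS.
Variables (Phi Delta : seq vec).
Hypothesis hPhi : root_system Phi.
Hypothesis hDelta : is_base Phi Delta.

Definition cone (x : vec) : Prop := exists r : 'I_(size Delta) -> R,
  (forall i, 0 <= r i) /\ x = \sum_(i < size Delta) r i *: Delta`_i.

Lemma cone_add x y : cone x -> cone y -> cone (x + y).
Proof.
move=> [r [hr ->]] [s [hs ->]]; exists (fun i => r i + s i); split.
  by move=> i; rewrite addr_ge0.
by rewrite -big_split /=; apply: eq_bigr => i _; rewrite scalerDl.
Qed.

Lemma cone_scale x c : 0 <= c -> cone x -> cone (c *: x).
Proof.
move=> hc [r [hr ->]]; exists (fun i => c * r i); split.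
  by move=> i; rewrite mulr_ge0.
by rewrite scaler_sumr; apply: eq_bigr => i _; rewrite scalerA.
Qed.

Lemma pos_cone b : posroot Phi Delta b -> cone b.
Proof.
move=> [_ [k [hk ->]]]; exists (fun i => (k i)%:~R); split => //.
by move=> i; rewrite ler0z.
Qed.

Lemma cone_anti x : cone x -> cone (- x) -> x = 0.
Proof.
case: hDelta => _ hind _.
move=> [r [hr ex]] [s [hs ex']].
have h0 : \sum_(i < size Delta) (r i + s i) *: Delta`_i = 0.
  rewrite (eq_bigr (fun i => r i *: Delta`_i + s i *: Delta`_i)); last by move=> i _; rewrite scalerDl.
  by rewrite big_split /= -ex -ex' subrr.
have hz := hind _ h0.
rewrite ex big1 // => i _.
have : r i + s i = 0 by apply: hz.
move/eqP; rewrite paddr_eq0 // => /andP [/eqP -> _]; by rewrite scale0r.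
Qed.

Lemma root_neq0 b : b \in Phi -> b != 0.
Proof. by case: hPhi => h0 _ _ _ _ hb; apply/eqP => e; move: h0; rewrite -e hb. Qed.

Lemma not_pos_neg b : posroot Phi Delta b -> negroot Phi Delta b -> False.
Proof.
move=> hp hn; have := cone_anti (pos_cone hp) (pos_cone hn).
by case: hp => hb _ e; move: (root_neq0 hb); rewrite e eqxx.
Qed.

Lemma refl_self a : a \in Phi -> refl a *m a = - a.
Proof.
move=> ha; rewrite refl_mul divfK ?dot_ge0 ?root_neq0 //.
by rewrite scaler_nat mulr2n opprD addrA subrr sub0r.
Qed.

Lemma refl_Phi a b : a \in Phi -> b \in Phi -> refl a *m b \in Phi.
Proof. by case: hPhi => _ _ h _ _; apply: h. Qed.

Lemma oppPhi b : b \in Phi -> - b \in Phi.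
Proof. by move=> hb; rewrite -refl_self // refl_Phi. Qed.

Lemma pos_or_neg b : b \in Phi -> posroot Phi Delta b \/ negroot Phi Delta b.
Proof.
move=> hb; case: hDelta => _ _ h; have [k [ek [hk|hk]]] := h b hb.
  by left; split => //; exists k.
right; split; first exact: oppPhi.
exists (fun i => - k i); split; first by move=> i; rewrite oppr_ge0.
rewrite ek -sumrN; apply: eq_bigr => i _; by rewrite mulrNz scaleNr.
Qed.

Lemma weyl_props u : weyl Phi u ->
  [/\ u \in unitmx, (forall b, b \in Phi -> u *m b \in Phi) &
      (forall b, b \in Phi -> invmx u *m b \in Phi)].
Proof.
elim => {u} [a ha| |u v _ [uu hu hu'] _ [uv hv hv']|u _ [uu hu hu']].
- by split; [exact: refl_unit| move=> b hb; exact: refl_Phi | move=> b hb; rewrite refl_inv; exact: refl_Phi].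
- split; [exact: unitmx1| by move=> b; rewrite mul1mx| by move=> b; rewrite invmx1 mul1mx].
- split; first by rewrite unitmx_mul uu uv.
    by move=> b hb; rewrite -mulmxA; apply/hu/hv.
  by move=> b hb; rewrite invmxM // -mulmxA; apply/hv'/hu'.
- by split; [rewrite unitmx_inv| exact: hu'| rewrite invmxK].
Qed.

Definition L (u : mat) : nat :=
  size (undup [seq b <- Phi | `[< Nset Phi Delta u b >]]).

Lemma memN u b : b \in undup [seq b <- Phi | `[< Nset Phi Delta u b >]] <->
  b \in Phi /\ Nset Phi Delta u b.
Proof.
rewrite mem_undup mem_filter; split; first by case/andP => /asboolP.
by case=> h1 h2; rewrite h1 andbT; apply/asboolP.
Qed.

Lemma len_step u a : weyl Phi u -> posroot Phi Delta a ->
  posroot Phi Delta (invmx u *m a) -> (L u < L (refl a *m u))%N.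
Proof.
move=> hw ha hua.
have [uu hu hu'] := weyl_props hw.
have aPhi : a \in Phi by case: ha.
set t := refl a.
have itu : invmx (t *m u) = invmx u *m t by rewrite invmxM ?refl_unit // refl_inv.
have tt : forall x : vec, t *m (t *m x) = x by move=> x; rewrite mulmxA refl_invol mul1mx.
rewrite /L; set S := undup _; set S' := undup _.
pose phi (b : vec) := if `[< posroot Phi Delta (t *m b) >] then t *m b else b.
have H1 : forall b, b \in S -> phi b \in S'.
  move=> b /memN [bPhi [bpos bneg]]; apply/memN; rewrite /phi.
  case: asboolP => [tp|tn].
    split; first by case: tp.
    by split => //; rewrite itu -mulmxA tt.
  split => //; split => //.
  have tbPhi : t *m b \in Phi by apply: refl_Phi.
  have tneg : negroot Phi Delta (t *m b) by case: (pos_or_neg tbPhi).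
  set x := invmx u *m (t *m b).
  have xPhi : x \in Phi by apply: hu'.
  rewrite itu -mulmxA; case: (pos_or_neg xPhi) => // xp; exfalso.
  set c := 2 / dot a a * dot a b.
  have etb : t *m b = b - c *: a by rewrite /t refl_mul.
  have hc : 0 <= c.
    rewrite leNgt; apply/negP => cn.
    have : cone (t *m b).
      rewrite etb -scaleNr; apply: cone_add; first exact: pos_cone.
      by apply: (@cone_scale a (- c)); [rewrite oppr_ge0 ltW | exact: pos_cone].
    move/cone_anti => /(_ (pos_cone tneg)) e.
    by move: (root_neq0 tbPhi); rewrite e eqxx.
  have : cone (- x).
    rewrite /x etb mulmxBr opprB -scalemxAr addrC; apply: cone_add.
      exact: (pos_cone bneg).
    by apply: cone_scale => //; exact: pos_cone.
  move/(cone_anti (pos_cone xp)) => e.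
  by move: (root_neq0 xPhi); rewrite e eqxx.
have H2 : {in S &, injective phi}.
  move=> b1 b2 /memN [_ [p1 _]] /memN [_ [p2 _]]; rewrite /phi.
  case: asboolP => h1; case: asboolP => h2.
  - by move=> e; rewrite -(tt b1) e tt.
  - move=> e; exfalso; apply: h2; by rewrite -e tt.
  - move=> e; exfalso; apply: h1; by rewrite e tt.
  - by [].
have H3 : a \in S'.
  apply/memN; split => //; split => //.
  by rewrite itu -mulmxA /t refl_self // mulmxN /negroot opprK.
have H4 : a \notin map phi S.
  apply/negP => /mapP [b0 /memN [bPhi [bpos bneg]]]; rewrite /phi.
  case: asboolP => h e.
    have eb : b0 = - a by rewrite -(tt b0) -e /t refl_self.
    by apply: (not_pos_neg bpos); rewrite /negroot eb opprK.
  by apply: (not_pos_neg hua); rewrite e.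
have : (size (a :: map phi S) <= size S')%N.
  apply: uniq_leq_size.
    by rewrite /= H4 (map_inj_in_uniq H2) undup_uniq.
  move=> x; rewrite inE => /orP [/eqP ->|/mapP [b hb ->]]; [exact: H3 | exact: H1 hb].
by rewrite /= size_map.
Qed.

Lemma bruhat_len u v : bruhat_lt Phi Delta u v ->
  [/\ weyl Phi u, weyl Phi v, (L u < L v)%N &
      (exists a, posroot Phi Delta a /\ v = refl a *m u) \/ ((L u).+1 < L v)%N].
Proof.
elim => {u v} [u a hw ha hn | u v x _ [h1 h2 h3 _] _ [_ h5 h6 _]].
  have [uu _ _] := weyl_props hw.
  have hua : posroot Phi Delta (invmx u *m a).
    move: hn; rewrite invmxM ?refl_unit // refl_inv -mulmxA refl_self; last by case: ha.
    by rewrite mulmxN /negroot opprK.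
  split => //; last by left; exists a.
    by apply: weyl_mul => //; apply: weyl_refl; case: ha.
  exact: len_step.
split => //; first exact: ltn_trans h3 h6.
by right; apply: leq_ltn_trans h6.
Qed.

Lemma lg_le g u : (ell_gamma Phi Delta g u <= L u)%N.
Proof.
rewrite /ell_gamma /L; apply: uniq_leq_size; first exact: undup_uniq.
move=> b; rewrite !mem_undup !mem_filter => /andP [/asboolP [h1 [h2 _]] ->].
by rewrite andbT; apply/asboolP; split.
Qed.

Lemma L_le g u b : weyl Phi u -> invmx u *m b = - g ->
  (L u <= (ell_gamma Phi Delta g u).+1)%N.
Proof.
move=> hw hb; have [uu _ _] := weyl_props hw.
rewrite /ell_gamma /L.
have -> : (size (undup [seq b <- Phi | `[< Ngamma Phi Delta g u b >]])).+1 =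
  size (b :: undup [seq b <- Phi | `[< Ngamma Phi Delta g u b >]]) by [].
apply: uniq_leq_size; first exact: undup_uniq.
move=> c; rewrite inE !mem_undup !mem_filter => /andP [/asboolP [h1 h2] ->].
case: (eqVneq c b) => //= ne; rewrite andbT; apply/asboolP; split => //; split => //.
move=> e; move/eqP: ne; apply.
by rewrite -(mulKVmx uu c) -(mulKVmx uu b) hb -e opprK.
Qed.

End RS.
End S.

Lemma vform (R : realType) (n : nat)
    (Phi Delta : seq 'cV[R]_n) (gamma : 'cV[R]_n)
    (hPhi : root_system Phi) (hDelta : is_base Phi Delta)
    (w : 'M[R]_n) (hw : weyl Phi w) (beta : 'cV[R]_n) (v : 'M[R]_n) :
  (weyl Phi v /\ bruhat_lt Phi Delta w v /\
   Ngamma Phi Delta gamma w beta /\ Nset Phi Delta v beta /\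
   ell_gamma Phi Delta gamma w = ell_gamma Phi Delta gamma v /\
   invmx v *m beta = - gamma) ->
  v = refl (beta - w *m - gamma) *m w.
Proof.
move=> [hv [hb [hng [hn [hl hi]]]]].
have [uw _ _] := weyl_props hPhi hw.
have [_ _ _ [[a [ha ev]] | hlt]] := bruhat_len hPhi hDelta hb; last first.
  have := L_le Delta hPhi hv hi; have := lg_le Phi Delta gamma w.
  rewrite hl => h1 h2; exfalso; move: hlt.
  by rewrite ltnNge (leq_trans h2) // ltnS.
have emu : refl a *m beta = w *m - gamma.
  by rewrite -hi ev invmxM ?refl_unit // refl_inv -mulmxA mulKVmx.
set c := 2 / dot a a * dot a beta.
have ed : beta - w *m - gamma = c *: a by rewrite -emu refl_mul opprB addrC subrK.
have hc : c != 0.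
  apply/eqP => c0; case: hng => _ [_ hne]; apply: hne.
  move: ed; rewrite c0 scale0r => /eqP; rewrite subr_eq0 => /eqP ->.
  by rewrite mulKmx // opprK.
by rewrite ed refl_scale.
Qed.

Theorem corollary3p2 (R : realType) (n : nat)
    (Phi Delta : seq 'cV[R]_n) (gamma : 'cV[R]_n)
    (hPhi : root_system Phi) (hirr : irreducible Phi)
    (hDelta : is_base Phi Delta) (hgamma : highest_root Phi Delta gamma)
    (w : 'M[R]_n) (hw : weyl Phi w)
    (beta : 'cV[R]_n) (hbeta : posroot Phi Delta beta)
    (v1 v2 : 'M[R]_n) :
  (weyl Phi v1 /\ bruhat_lt Phi Delta w v1 /\
   Ngamma Phi Delta gamma w beta /\ Nset Phi Delta v1 beta /\
   ell_gamma Phi Delta gamma w = ell_gamma Phi Delta gamma v1 /\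
   invmx v1 *m beta = - gamma) ->
  (weyl Phi v2 /\ bruhat_lt Phi Delta w v2 /\
   Ngamma Phi Delta gamma w beta /\ Nset Phi Delta v2 beta /\
   ell_gamma Phi Delta gamma w = ell_gamma Phi Delta gamma v2 /\
   invmx v2 *m beta = - gamma) ->
  v1 = v2.
Proof.
move=> h1 h2.
by rewrite (vform hPhi hDelta hw h1) (vform hPhi hDelta hw h2).
Qed.
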